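(* The set of points $x\in[0,1]$ whose forward orbit $\{R^n(x):n\ge0\}$ is dense in $[0,1]$ is uncountable and dense in $[0,1]$.
   Context: Define $\rho$ on binary words: for $b=b_1b_2\dots$, $\rho(b)$ is obtained by deleting every digit $b_n=0$ and replacing every $b_n=1$ by $0$ if $n$ is odd and by $1$ if $n$ is even. For $x\in(0,1]$ let $\beta(x)$ be the unique binary expansion of $x$ with infinitely many $1$'s. Define $R:[0,1]\to[0,1]$ by $R(0)=2/3$ and, for $x\in(0,1]$, $R(x)=\sum_{n\ge1}c_n2^{-n}$ where $c=\rho(\beta(x))$. *)

(* Defs.v *)
From Stdlib Require Import Reals Lra ClassicalEpsilon.
From Coquelicot Require Import Coquelicot.
Open Scope R_scope.

(* Infinite binary words b = b_1 b_2 ... are represented as b : nat -> bool,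
   with b_{k+1} := b k (0-based indexing). *)

Definition bin_term (b : nat -> bool) (k : nat) : R :=
  if b k then / 2 ^ (S k) else 0.

Definition inf_many_ones (b : nat -> bool) : Prop :=
  forall N : nat, exists k : nat, (N <= k)%nat /\ b k = true.

(* beta(x): the (unique, for x in (0,1]) binary expansion of x with
   infinitely many 1's; chosen by Hilbert's epsilon. *)
Definition beta (x : R) : nat -> bool :=
  epsilon (inhabits (fun _ : nat => false))
    (fun b => inf_many_ones b /\ is_series (bin_term b) x).

Fixpoint count_ones (b : nat -> bool) (m : nat) : nat :=
  match m with
  | O => O
  | S m' => (count_ones b m' + (if b m' then 1 else 0))%nat
  end.

(* rho(b): delete the 0 digits; the (n+1)-th surviving digit comes from
   the (n+1)-th 1 of b, located at (1-based) position p+1 where b p = true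
   and exactly n ones precede it; it is replaced by 0 if p+1 is odd and by 1
   if p+1 is even, i.e. by 1 iff p (0-based) is odd. *)
Definition rho (b : nat -> bool) : nat -> bool :=
  fun n => Nat.odd (epsilon (inhabits O)
                      (fun p => b p = true /\ count_ones b p = n)).

(* The map R of the paper (named Rmap to avoid clashing with the type R).
   Values outside [0,1] are irrelevant. *)
Definition Rmap (x : R) : R :=
  if Req_EM_T x 0 then 2 / 3 else Series (bin_term (rho (beta x))).

Definition orbit_dense (x : R) : Prop :=
  forall y : R, 0 <= y <= 1 -> forall eps : R, 0 < eps ->
    exists n : nat, Rabs (Nat.iter n Rmap x - y) < eps.

(* Main.v *)
Require Import Defs.
From Stdlib Require Import Reals.
From Stdlib Require Import Lra Lia ClassicalEpsilon Classical FunctionalExtensionality List.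
From Coquelicot Require Import Coquelicot.
Import ListNotations.
Open Scope R_scope.

Definition val (c : nat -> bool) : R := Series (bin_term c).
Definition wcons (b : bool) (w : nat -> bool) : nat -> bool :=
  fun n => match n with O => b | S n => w n end.
Definition shift (c : nat -> bool) : nat -> bool := fun n => c (S n).
Definition b2R (b : bool) : R := if b then 1 else 0.

Lemma wcons_eta c : c = wcons (c O) (shift c).
Proof. apply functional_extensionality; intros [|n]; reflexivity. Qed.

Definition geo (k : nat) : R := / 2 ^ S k.

Lemma geo_is : is_series geo 1.
Proof.
  assert (H := is_series_geom (/2)).
  assert (Habs : Rabs (/2) < 1) by (rewrite Rabs_pos_eq; lra).
  specialize (H Habs).
  apply (is_series_scal_l (/2)) in H.
  replace 1 with (scal (/2) (/ (1 - /2))).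
  2:{ unfold scal; simpl; unfold mult; simpl. field. }
  eapply is_series_ext; [|exact H].
  intros n; unfold geo, scal; simpl; unfold mult; simpl.
  rewrite pow_inv. rewrite Rinv_mult. reflexivity.
Qed.

Lemma geo_ex : ex_series geo.
Proof. exists 1; apply geo_is. Qed.

Lemma bin_term_bound c k : 0 <= bin_term c k <= geo k.
Proof.
  unfold bin_term, geo. assert (0 < 2 ^ S k) by (apply pow_lt; lra).
  assert (0 < / 2 ^ S k) by (apply Rinv_0_lt_compat; lra).
  destruct (c k); split; lra.
Qed.

Lemma bin_ex c : ex_series (bin_term c).
Proof.
  apply (@ex_series_le R_AbsRing R_CompleteNormedModule _ geo); [|apply geo_ex].
  intros n. destruct (bin_term_bound c n).
  unfold norm; simpl. unfold abs; simpl. rewrite Rabs_pos_eq; lra.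
Qed.

Lemma val_bounds c : 0 <= val c <= 1.
Proof.
  split.
  - unfold val. replace 0 with (Series (fun n => 0 * bin_term c n)).
    + apply Series_le; [|apply bin_ex]. intros n; destruct (bin_term_bound c n); lra.
    + rewrite Series_scal_l; lra.
  - unfold val. rewrite <- (is_series_unique _ _ geo_is).
    apply Series_le; [apply bin_term_bound|apply geo_ex].
Qed.

Lemma val_cons b w : val (wcons b w) = (b2R b + val w) / 2.
Proof.
  unfold val. rewrite Series_incr_1 by apply bin_ex.
  rewrite (Series_ext _ (fun k => bin_term w k * / 2)).
  2:{ intros n. unfold bin_term; simpl. destruct (w n); [|lra].
      rewrite Rinv_mult. lra. }
  rewrite Series_scal_r. unfold bin_term, b2R; simpl. destruct b; field.
Qed.

Lemma val_c c : val c = (b2R (c O) + val (shift c)) / 2.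
Proof. rewrite (wcons_eta c) at 1. apply val_cons. Qed.

Lemma val_agree K : forall c d, (forall i, (i < K)%nat -> c i = d i) ->
  Rabs (val c - val d) <= / 2 ^ K.
Proof.
  induction K; intros c d H.
  - simpl. rewrite Rinv_1. destruct (val_bounds c), (val_bounds d).
    apply Rabs_le; lra.
  - rewrite (val_c c), (val_c d). rewrite (H O) by lia.
    assert (IH := IHK (shift c) (shift d) (fun i Hi => H (S i) ltac:(lia))).
    replace ((b2R (d 0%nat) + val (shift c)) / 2 - (b2R (d 0%nat) + val (shift d)) / 2)
      with ((val (shift c) - val (shift d)) / 2) by field.
    unfold Rdiv. rewrite Rabs_mult, (Rabs_pos_eq (/2)) by lra.
    simpl. rewrite Rinv_mult. lra.
Qed.

Lemma val_pos k : forall c, c k = true -> 0 < val c.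
Proof.
  induction k; intros c H; rewrite val_c.
  - rewrite H. unfold b2R. destruct (val_bounds (shift c)). lra.
  - assert (0 < val (shift c)) by (apply IHk; exact H).
    destruct (c O); unfold b2R; lra.
Qed.

Lemma inf_shift c : inf_many_ones c -> inf_many_ones (shift c).
Proof.
  intros H N. destruct (H (S N)) as [k [Hk Hc]].
  destruct k; [lia|]. exists k; split; [lia|exact Hc].
Qed.

Lemma val_inj_base c d : c O <> d O -> inf_many_ones c -> inf_many_ones d -> val c <> val d.
Proof.
  intros Hne.
  assert (Hg : forall c d, c O = true -> d O = false -> inf_many_ones c -> val c <> val d).
  { clear. intros c d H1 H2 Hc.
    destruct (Hc 1%nat) as [k [Hk Hck]]. destruct k; [lia|].
    assert (0 < val (shift c)) by (apply (val_pos k); exact Hck).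
    rewrite (val_c c), (val_c d), H1, H2. unfold b2R.
    destruct (val_bounds (shift d)). lra. }
  intros Hc Hd. destruct (c O) eqn:E1, (d O) eqn:E2; try congruence.
  - apply Hg; auto.
  - intros Heq; symmetry in Heq; revert Heq; apply Hg; auto.
Qed.

Lemma val_inj_k k : forall c d, c k <> d k -> inf_many_ones c -> inf_many_ones d -> val c <> val d.
Proof.
  induction k; intros c d Hne Hc Hd.
  - apply val_inj_base; auto.
  - destruct (Bool.bool_dec (c O) (d O)) as [E|E].
    + rewrite (val_c c), (val_c d), E. intros Heq.
      apply (IHk (shift c) (shift d) Hne (inf_shift _ Hc) (inf_shift _ Hd)). lra.
    + apply val_inj_base; auto.
Qed.

Lemma val_inj c d : inf_many_ones c -> inf_many_ones d -> val c = val d -> c = d.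
Proof.
  intros Hc Hd Heq. apply functional_extensionality. intros k.
  destruct (Bool.bool_dec (c k) (d k)) as [E|E]; auto.
  exfalso; exact (val_inj_k k c d E Hc Hd Heq).
Qed.

Definition stepr (r : R) : R := if Rlt_dec 1 (2 * r) then 2 * r - 1 else 2 * r.
Fixpoint rem (x : R) (k : nat) : R :=
  match k with O => x | S k => stepr (rem x k) end.
Definition dig (x : R) (k : nat) : bool := if Rlt_dec 1 (2 * rem x k) then true else false.

Lemma rem_S x k : rem x (S k) = rem (stepr x) k.
Proof. induction k; simpl; [reflexivity|]. simpl in IHk. rewrite IHk. reflexivity. Qed.

Lemma dig_shift x : shift (dig x) = dig (stepr x).
Proof. apply functional_extensionality; intros k. unfold shift, dig. rewrite rem_S. reflexivity. Qed.

Lemma stepr_range x : 0 <= x <= 1 -> 0 <= stepr x <= 1.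
Proof. unfold stepr; destruct (Rlt_dec 1 (2*x)); lra. Qed.

Lemma small_zero a : (forall K, Rabs a <= / 2 ^ K) -> a = 0.
Proof.
  intros H. destruct (Req_dec a 0) as [E|E]; auto. exfalso.
  assert (Hp : 0 < Rabs a) by (apply Rabs_pos_lt; auto).
  assert (Habs : Rabs (/2) < 1) by (rewrite Rabs_pos_eq; lra).
  destruct (pow_lt_1_zero (/2) Habs (Rabs a) Hp) as [N HN].
  specialize (HN N (le_n _)). specialize (H N).
  rewrite pow_inv in HN. rewrite Rabs_pos_eq in HN.
  - lra.
  - left; apply Rinv_0_lt_compat, pow_lt; lra.
Qed.

Lemma dig_approx K : forall x, 0 <= x <= 1 -> Rabs (val (dig x) - x) <= / 2 ^ K.
Proof.
  induction K; intros x Hx.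
  - simpl. rewrite Rinv_1. destruct (val_bounds (dig x)). apply Rabs_le; lra.
  - rewrite val_c, dig_shift.
    assert (IH := IHK (stepr x) (stepr_range x Hx)).
    assert (E : x = (b2R (dig x 0%nat) + stepr x) / 2).
    { unfold dig, stepr, b2R; simpl. destruct (Rlt_dec 1 (2*x)); field. }
    replace ((b2R (dig x 0%nat) + val (dig (stepr x))) / 2 - x)
      with ((val (dig (stepr x)) - stepr x) / 2) by lra.
    unfold Rdiv. rewrite Rabs_mult, (Rabs_pos_eq (/2)) by lra.
    simpl. rewrite Rinv_mult. lra.
Qed.

Lemma dig_val x : 0 <= x <= 1 -> val (dig x) = x.
Proof.
  intros Hx. assert (val (dig x) - x = 0); [|lra].
  apply small_zero. intros K; apply dig_approx; auto.
Qed.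

Lemma rem_range x k : 0 < x <= 1 -> 0 < rem x k <= 1.
Proof.
  intros Hx; induction k; simpl; auto.
  unfold stepr; destruct (Rlt_dec 1 (2 * rem x k)); lra.
Qed.

Lemma dig_inf x : 0 < x <= 1 -> inf_many_ones (dig x).
Proof.
  intros Hx N. apply NNPP; intros Hn.
  assert (Hz : forall k, (N <= k)%nat -> dig x k = false).
  { intros k Hk. destruct (dig x k) eqn:E; auto. exfalso; apply Hn; exists k; auto. }
  assert (Hr : forall j, rem x (j + N) = 2 ^ j * rem x N).
  { induction j; simpl; [lra|]. unfold stepr. specialize (Hz (j + N)%nat ltac:(lia)).
    unfold dig in Hz. destruct (Rlt_dec 1 (2 * rem x (j + N))); [discriminate|].
    rewrite IHj. ring. }
  destruct (rem_range x N Hx) as [Hp _].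
  assert (Habs : Rabs (/2) < 1) by (rewrite Rabs_pos_eq; lra).
  destruct (pow_lt_1_zero (/2) Habs _ Hp) as [M HM].
  specialize (HM M (le_n _)). rewrite pow_inv in HM.
  assert (H2 : 0 < 2 ^ M) by (apply pow_lt; lra).
  rewrite Rabs_pos_eq in HM by (left; apply Rinv_0_lt_compat; lra).
  destruct (rem_range x (M + N) Hx) as [_ Hle]. rewrite Hr in Hle.
  apply (Rmult_lt_compat_l (2 ^ M)) in HM; auto.
  rewrite Rinv_r in HM by lra. lra.
Qed.

Lemma beta_spec x : 0 < x <= 1 -> inf_many_ones (beta x) /\ is_series (bin_term (beta x)) x.
Proof.
  intros Hx. unfold beta. apply epsilon_spec.
  exists (dig x). split; [apply dig_inf; auto|].
  rewrite <- (dig_val x) at 2 by lra. apply Series_correct, bin_ex.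
Qed.

Lemma beta_val c : inf_many_ones c -> beta (val c) = c.
Proof.
  intros Hc. destruct (Hc O) as [k [_ Hk]].
  assert (Hp := val_pos k c Hk). destruct (val_bounds c).
  destruct (beta_spec (val c)) as [H1 H2]; [lra|].
  apply val_inj; auto. unfold val at 1. apply is_series_unique; auto.
Qed.

Lemma Rmap_val c : inf_many_ones c -> Rmap (val c) = val (rho c).
Proof.
  intros Hc. destruct (Hc O) as [k [_ Hk]].
  assert (Hp := val_pos k c Hk). unfold Rmap.
  destruct (Req_EM_T (val c) 0); [lra|]. rewrite beta_val; auto.
Qed.
Close Scope R_scope.

Definition bn (b : bool) : nat := if b then 1%nat else 0%nat.

Lemma count_S b p : count_ones b (S p) = (count_ones b p + bn (b p))%nat.
Proof. reflexivity. Qed.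

Lemma count_mono b p q : (p <= q)%nat -> (count_ones b p <= count_ones b q)%nat.
Proof. induction 1; [lia|]. rewrite count_S. lia. Qed.

Lemma rho_char b p n : b p = true -> count_ones b p = n -> rho b n = Nat.odd p.
Proof.
  intros H1 H2. unfold rho.
  destruct (epsilon_spec (inhabits O) (fun p => b p = true /\ count_ones b p = n)
     (ex_intro _ p (conj H1 H2))) as [H3 H4].
  set (q := epsilon _ _) in *. clearbody q.
  assert (q = p); [|subst; reflexivity].
  destruct (Nat.lt_trichotomy q p) as [Hl|[Hl|Hl]]; auto; exfalso.
  - assert (Hm := count_mono b (S q) p Hl). rewrite count_S, H3 in Hm. simpl in Hm. lia.
  - assert (Hm := count_mono b (S p) q Hl). rewrite count_S, H1 in Hm. simpl in Hm. lia.
Qed.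

Lemma count_unbounded b : inf_many_ones b -> forall k, exists N, (k <= count_ones b N)%nat.
Proof.
  intros H k; induction k.
  - exists O; lia.
  - destruct IHk as [N HN]. destruct (H N) as [p [Hp Hb]].
    exists (S p). rewrite count_S, Hb. simpl. assert (Hm := count_mono b N p Hp). lia.
Qed.

Lemma ith_aux b N : forall i, (i < count_ones b N)%nat -> exists p, b p = true /\ count_ones b p = i.
Proof.
  induction N; intros i Hi; simpl in Hi; [lia|].
  destruct (Nat.lt_ge_cases i (count_ones b N)) as [Hl|Hl]; auto.
  exists N. destruct (b N) eqn:E; simpl in Hi; [split; auto; lia| lia].
Qed.

Lemma ith_one b : inf_many_ones b -> forall i, exists p, b p = true /\ count_ones b p = i.
Proof.
  intros H i. destruct (count_unbounded b H (S i)) as [N HN]. apply (ith_aux b N). lia.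
Qed.

Lemma count_cons b w p : count_ones (wcons b w) (S p) = (bn b + count_ones w p)%nat.
Proof.
  induction p; [unfold bn; destruct b; simpl; lia|]. rewrite count_S, IHp, count_S. unfold bn; simpl. lia.
Qed.

Lemma inf_cons b w : inf_many_ones w -> inf_many_ones (wcons b w).
Proof. intros H N. destruct (H N) as [k [Hk Hw]]. exists (S k); split; [lia|exact Hw]. Qed.

Definition negw (v : nat -> bool) : nat -> bool := fun i => negb (v i).

Lemma rho_cons_false w : inf_many_ones w -> rho (wcons false w) = negw (rho w).
Proof.
  intros H. apply functional_extensionality; intros i.
  destruct (ith_one w H i) as [p [H1 H2]].
  unfold negw. rewrite (rho_char w p i H1 H2).
  rewrite (rho_char (wcons false w) (S p) i H1) by (rewrite count_cons; simpl; lia).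
  rewrite Nat.odd_succ, <- Nat.negb_odd. reflexivity.
Qed.

Lemma rho_cons_true w : inf_many_ones w -> rho (wcons true w) = wcons false (negw (rho w)).
Proof.
  intros H. apply functional_extensionality; intros [|i].
  - simpl. apply (rho_char _ O); reflexivity.
  - destruct (ith_one w H i) as [p [H1 H2]].
    simpl. unfold negw. rewrite (rho_char w p i H1 H2).
    rewrite (rho_char (wcons true w) (S p) (S i) H1) by (rewrite count_cons; simpl; lia).
    rewrite Nat.odd_succ, <- Nat.negb_odd. reflexivity.
Qed.

Definition Tw (e : bool) (d : nat -> bool) : nat -> bool :=
  fun i => xorb (if Nat.even i then negb (d (Nat.div2 i)) else d (Nat.div2 i)) e.

Lemma even_2 i : Nat.even (2 * i) = true.
Proof. rewrite Nat.even_mul. reflexivity. Qed.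
Lemma even_2S i : Nat.even (S (2 * i)) = false.
Proof. rewrite Nat.even_succ, Nat.odd_mul. reflexivity. Qed.
Lemma odd_2 i : Nat.odd (2 * i) = false.
Proof. rewrite Nat.odd_mul. reflexivity. Qed.
Lemma odd_2S i : Nat.odd (S (2 * i)) = true.
Proof. rewrite Nat.odd_succ, even_2. reflexivity. Qed.

Lemma Tw_even e d i : Tw e d (2 * i) = xorb (negb (d i)) e.
Proof. unfold Tw. rewrite even_2, Nat.div2_double. reflexivity. Qed.
Lemma Tw_odd e d i : Tw e d (S (2 * i)) = xorb (d i) e.
Proof. unfold Tw. rewrite even_2S, Nat.div2_succ_double. reflexivity. Qed.

Lemma count_Tw e d i : count_ones (Tw e d) (2 * i) = i.
Proof.
  induction i; [reflexivity|].
  replace (2 * S i)%nat with (S (S (2 * i))) by lia.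
  rewrite !count_S, IHi, Tw_odd, Tw_even.
  destruct (d i), e; simpl; lia.
Qed.

Lemma rho_Tw e d : rho (Tw e d) = fun i => xorb (d i) e.
Proof.
  apply functional_extensionality; intros i.
  destruct (xorb (d i) e) eqn:E.
  - rewrite (rho_char _ (S (2 * i)) i).
    + apply odd_2S.
    + rewrite Tw_odd; exact E.
    + rewrite count_S, count_Tw, Tw_even.
      destruct (d i), e; simpl in *; try discriminate; lia.
  - rewrite (rho_char _ (2 * i) i).
    + apply odd_2.
    + rewrite Tw_even. destruct (d i), e; simpl in *; congruence.
    + apply count_Tw.
Qed.

Lemma inf_Tw e d : inf_many_ones (Tw e d).
Proof.
  intros N. destruct (xorb (d N) e) eqn:E.
  - exists (S (2 * N)). rewrite Tw_odd. split; [lia|auto].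
  - exists (2 * N)%nat. rewrite Tw_even. split; [lia|]. destruct (d N), e; simpl in *; congruence.
Qed.

Lemma Tw_inj e d d' : Tw e d = Tw e d' -> d = d'.
Proof.
  intros H. apply functional_extensionality; intros i.
  assert (H' := f_equal (fun f => f (S (2 * i))) H). cbv beta in H'.
  rewrite !Tw_odd in H'. destruct (d i), (d' i), e; simpl in *; congruence.
Qed.

Definition wapp (u : list bool) (c : nat -> bool) : nat -> bool :=
  fun i => if Nat.ltb i (length u) then nth i u false else c (i - length u)%nat.

Lemma wapp_nil c : wapp [] c = c.
Proof. apply functional_extensionality; intros i. unfold wapp; simpl. f_equal; lia. Qed.

Lemma wapp_cons b u c : wapp (b :: u) c = wcons b (wapp u c).
Proof. apply functional_extensionality; intros [|i]; reflexivity. Qed.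

Lemma wapp_lt u c i : (i < length u)%nat -> wapp u c i = nth i u false.
Proof. intros H; unfold wapp. apply Nat.ltb_lt in H. rewrite H. reflexivity. Qed.

Lemma wapp_ge u c i : wapp u c (length u + i) = c i.
Proof.
  unfold wapp. destruct (Nat.ltb_spec (length u + i) (length u)); [lia|]. f_equal; lia.
Qed.

Lemma inf_app u c : inf_many_ones c -> inf_many_ones (wapp u c).
Proof.
  intros H N. destruct (H N) as [k [Hk Hc]]. exists (length u + k)%nat.
  rewrite wapp_ge. split; [lia|auto].
Qed.

Lemma wapp_inj u c c' : wapp u c = wapp u c' -> c = c'.
Proof.
  intros H. apply functional_extensionality; intros i.
  rewrite <- (wapp_ge u c i), <- (wapp_ge u c' i), H. reflexivity.
Qed.

Lemma negw_app l v : negw (wapp l v) = wapp (map negb l) (negw v).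
Proof.
  apply functional_extensionality; intros i. unfold negw, wapp. rewrite length_map.
  destruct (Nat.ltb i (length l)) eqn:E; auto.
  apply Nat.ltb_lt in E. rewrite (nth_indep (map negb l) false (negb false)) by (rewrite length_map; auto).
  rewrite map_nth. reflexivity.
Qed.

Fixpoint rhol (u : list bool) : list bool :=
  match u with
  | [] => []
  | false :: u => map negb (rhol u)
  | true :: u => false :: map negb (rhol u)
  end.

Definition xorw (e : bool) (v : nat -> bool) : nat -> bool := fun i => xorb (v i) e.

Lemma rho_app u : forall c, inf_many_ones c ->
  rho (wapp u c) = wapp (rhol u) (xorw (Nat.odd (length u)) (rho c)).
Proof.
  induction u as [|b u IH]; intros c Hc.
  - rewrite !wapp_nil. apply functional_extensionality; intros i. unfold xorw; simpl.
    destruct (rho c i); reflexivity.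
  - rewrite wapp_cons. assert (Hi := inf_app u c Hc).
    assert (Hx : negw (xorw (Nat.odd (length u)) (rho c)) = xorw (Nat.odd (length (b :: u))) (rho c)).
    { apply functional_extensionality; intros i. unfold negw, xorw. simpl length.
      rewrite Nat.odd_succ, <- Nat.negb_odd. destruct (rho c i), (Nat.odd (length u)); reflexivity. }
    destruct b.
    + rewrite rho_cons_true by auto. rewrite IH by auto. rewrite negw_app, Hx.
      simpl rhol. rewrite wapp_cons. reflexivity.
    + rewrite rho_cons_false by auto. rewrite IH by auto. rewrite negw_app, Hx. reflexivity.
Qed.

Fixpoint Pf (n : nat) (u : list bool) (c : nat -> bool) : nat -> bool :=
  match n with
  | O => c
  | S n => Tw (Nat.odd (length u)) (Pf n (rhol u) c)
  end.

Lemma rho_app_Pf n u c : rho (wapp u (Pf (S n) u c)) = wapp (rhol u) (Pf n (rhol u) c).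
Proof.
  simpl Pf. rewrite rho_app by apply inf_Tw. rewrite rho_Tw. f_equal.
  apply functional_extensionality; intros i. unfold xorw.
  destruct (Pf n (rhol u) c i), (Nat.odd (length u)); reflexivity.
Qed.

Lemma Pf_inj n : forall u c c', Pf n u c = Pf n u c' -> c = c'.
Proof.
  induction n; simpl; intros u c c' H; auto.
  apply Tw_inj in H. eapply IHn; eauto.
Qed.

Lemma Pf_local n : forall u c c' m, (forall k, (k <= m)%nat -> c k = c' k) -> Pf n u c m = Pf n u c' m.
Proof.
  induction n; simpl; intros u c c' m H; auto.
  unfold Tw. rewrite (IHn (rhol u) c c' (Nat.div2 m)); auto.
  intros k Hk. apply H. destruct m; [simpl in Hk; lia|].
  assert (Nat.div2 (S m) <= m)%nat by (apply Nat.div2_decr; lia). lia.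
Qed.

Lemma len_rhol u : (length (rhol u) <= length u)%nat.
Proof.
  induction u as [|[|] u IH]; simpl; rewrite ?length_map; lia.
Qed.

Lemma len_rhol2 u : u <> [] -> (length (rhol (rhol u)) < length u)%nat.
Proof.
  destruct u as [|[|] u]; intros H; [congruence| |]; simpl.
  - rewrite length_map. assert (H1 := len_rhol (map negb (rhol u))).
    rewrite length_map in H1. assert (H2 := len_rhol u). lia.
  - assert (H1 := len_rhol (map negb (rhol u))). rewrite length_map in H1.
    assert (H2 := len_rhol u). lia.
Qed.

Lemma rhol_nil_iter k : Nat.iter k rhol [] = [].
Proof. induction k; simpl; auto. rewrite IHk. reflexivity. Qed.

Lemma rhol_dies L : forall u k, (length u <= L)%nat -> (2 * length u <= k)%nat -> Nat.iter k rhol u = [].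
Proof.
  induction L; intros u k HL Hk.
  - destruct u; simpl in HL; [apply rhol_nil_iter|lia].
  - destruct u as [|b u'] eqn:Eu; [apply rhol_nil_iter|].
    rewrite <- Eu in *. assert (Hne : u <> []) by (subst; discriminate).
    assert (H2 := len_rhol2 u Hne).
    destruct k as [|[|k]]; [subst; simpl in Hk; lia|subst; simpl in Hk; lia|].
    rewrite !Nat.iter_succ_r. apply IHL; lia.
Qed.
Open Scope R_scope.

Lemma iter_Pf m : forall u c, inf_many_ones c ->
  Nat.iter m Rmap (val (wapp u (Pf m u c))) = val (wapp (Nat.iter m rhol u) c).
Proof.
  induction m; intros u c Hc; [reflexivity|].
  rewrite !Nat.iter_succ_r. rewrite Rmap_val.
  - rewrite rho_app_Pf. apply IHm; auto.
  - apply inf_app. simpl. apply inf_Tw.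
Qed.

Definition nn (w : nat -> list bool) (j : nat) : nat := (2 * length (w j))%nat.

Fixpoint Zb (w : nat -> list bool) (fuel j i : nat) : bool :=
  match fuel with
  | O => false
  | S f => if Nat.ltb i (length (w j)) then nth i (w j) false
           else Pf (nn w j) (w j) (Zb w f (S j)) (i - length (w j))
  end.

Definition Zw w j : nat -> bool := fun i => Zb w (S i) j i.

Lemma Zb_stable w (Hw : forall j, w j <> []) i :
  forall f1 f2 j, (i < f1)%nat -> (i < f2)%nat -> Zb w f1 j i = Zb w f2 j i.
Proof.
  induction i as [i IH] using (well_founded_induction Wf_nat.lt_wf).
  intros [|g1] [|g2] j H1 H2; try lia. simpl.
  destruct (Nat.ltb i (length (w j))) eqn:E; auto.
  apply Nat.ltb_ge in E. assert (1 <= length (w j))%nat by (destruct (w j) eqn:E'; [exfalso; apply (Hw j); auto| simpl; lia]).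
  apply Pf_local. intros k Hk. apply IH; lia.
Qed.

Lemma Zw_eq w (Hw : forall j, w j <> []) j :
  Zw w j = wapp (w j) (Pf (nn w j) (w j) (Zw w (S j))).
Proof.
  apply functional_extensionality; intros i. unfold Zw at 1, wapp. simpl.
  destruct (Nat.ltb i (length (w j))) eqn:E; auto.
  apply Nat.ltb_ge in E. assert (1 <= length (w j))%nat by (destruct (w j) eqn:E'; [exfalso; apply (Hw j); auto| simpl; lia]).
  apply Pf_local. intros k Hk. unfold Zw. apply Zb_stable; auto; lia.
Qed.

Lemma nn_pos w (Hw : forall j, w j <> []) j : exists m, nn w j = S m.
Proof.
  unfold nn. destruct (w j) eqn:E; [exfalso; apply (Hw j); auto|]. simpl.
  eexists; reflexivity.
Qed.

Lemma Zw_inf w (Hw : forall j, w j <> []) j : inf_many_ones (Zw w j).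
Proof.
  rewrite Zw_eq by auto. apply inf_app. destruct (nn_pos w Hw j) as [m Hm].
  rewrite Hm. simpl. apply inf_Tw.
Qed.

Lemma Zw_step w (Hw : forall j, w j <> []) j :
  Nat.iter (nn w j) Rmap (val (Zw w j)) = val (Zw w (S j)).
Proof.
  rewrite (Zw_eq w Hw j) at 1. rewrite iter_Pf by (apply Zw_inf; auto).
  rewrite (rhol_dies (length (w j))); [rewrite wapp_nil; reflexivity| lia | unfold nn; lia].
Qed.

Fixpoint Nt w (j : nat) : nat := match j with O => O | S j => (nn w j + Nt w j)%nat end.

Lemma iter_Nt w (Hw : forall j, w j <> []) j :
  Nat.iter (Nt w j) Rmap (val (Zw w 0)) = val (Zw w j).
Proof.
  induction j; [reflexivity|]. simpl Nt. rewrite Nat.iter_add, IHj. apply Zw_step; auto.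
Qed.

Fixpoint pos2l (p : positive) : list bool :=
  match p with xH => [] | xO p => false :: pos2l p | xI p => true :: pos2l p end.
Fixpoint l2pos (l : list bool) : positive :=
  match l with [] => xH | false :: l => xO (l2pos l) | true :: l => xI (l2pos l) end.
Lemma pos2l_l2pos l : pos2l (l2pos l) = l.
Proof. induction l as [|[|] l IH]; simpl; rewrite ?IH; auto. Qed.
Definition dec (k : nat) : list bool := pos2l (Pos.of_succ_nat k).
Lemma dec_surj u : exists k, dec k = u.
Proof.
  exists (Init.Nat.pred (Pos.to_nat (l2pos u))). unfold dec.
  rewrite (SuccNat2Pos.inv _ (l2pos u)). apply pos2l_l2pos.
  assert (H := Pos2Nat.is_pos (l2pos u)). lia.
Qed.

Definition tgt (p : list bool) (s : nat -> bool) (j : nat) : list bool :=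
  (match j with O => p | S k => dec k end) ++ [s j].

Lemma tgt_ne p s j : tgt p s j <> [].
Proof. unfold tgt. intros H. apply app_eq_nil in H. destruct H; discriminate. Qed.

Definition Phi p s : R := val (Zw (tgt p s) 0).

Lemma pre_nth y K i : (i < K)%nat -> nth i (map (dig y) (seq 0 K)) false = dig y i.
Proof.
  intros H. rewrite (nth_indep _ false (dig y O)) by (rewrite length_map, length_seq; auto).
  rewrite map_nth, seq_nth by auto. reflexivity.
Qed.

Lemma Zw_prefix p s j u :
  (match j with O => p | S k => dec k end) = u ->
  forall i, (i < length u)%nat -> Zw (tgt p s) j i = nth i u false.
Proof.
  intros Hu i Hi. rewrite Zw_eq by apply tgt_ne. rewrite wapp_lt.
  - unfold tgt. rewrite Hu. apply app_nth1; auto.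
  - unfold tgt. rewrite Hu, length_app. lia.
Qed.

Lemma approx y eps : 0 <= y <= 1 -> 0 < eps ->
  exists K, forall c, (forall i, (i < K)%nat -> c i = dig y i) -> Rabs (val c - y) < eps.
Proof.
  intros Hy He.
  assert (Habs : Rabs (/2) < 1) by (rewrite Rabs_pos_eq; lra).
  destruct (pow_lt_1_zero (/2) Habs eps He) as [K HK].
  specialize (HK K (le_n _)). rewrite pow_inv, Rabs_pos_eq in HK
    by (left; apply Rinv_0_lt_compat, pow_lt; lra).
  exists K. intros c Hc.
  assert (H := val_agree K c (dig y) Hc). rewrite (dig_val y Hy) in H. lra.
Qed.

Lemma Phi_good p s : 0 <= Phi p s <= 1 /\ orbit_dense (Phi p s).
Proof.
  split; [apply val_bounds|].
  intros y Hy eps He. destruct (approx y eps Hy He) as [K HK].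
  destruct (dec_surj (map (dig y) (seq 0 K))) as [k Hk].
  exists (Nt (tgt p s) (S k)). unfold Phi. 
  rewrite (iter_Nt (tgt p s) (tgt_ne p s) (S k)).
  apply HK. intros i Hi.
  assert (Hl : (i < length (map (dig y) (seq 0 K)))%nat) by (rewrite length_map, length_seq; auto).
  rewrite (Zw_prefix p s (S k) _ Hk i Hl).
  apply pre_nth; auto.
Qed.

Lemma Phi_near y eps : 0 <= y <= 1 -> 0 < eps ->
  exists p, Rabs (Phi p (fun _ => false) - y) < eps.
Proof.
  intros Hy He. destruct (approx y eps Hy He) as [K HK].
  exists (map (dig y) (seq 0 K)). unfold Phi. apply HK. intros i Hi.
  assert (Hl : (i < length (map (dig y) (seq 0 K)))%nat) by (rewrite length_map, length_seq; auto).
  rewrite (Zw_prefix _ _ O (map (dig y) (seq 0 K)) eq_refl i Hl).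
  apply pre_nth; auto.
Qed.

Lemma min_ex (P : nat -> Prop) : forall j, P j -> exists m, P m /\ forall k, (k < m)%nat -> ~ P k.
Proof.
  intros j; induction j as [j IH] using (well_founded_induction Wf_nat.lt_wf). intros Hj.
  destruct (classic (exists k, (k < j)%nat /\ P k)) as [[k [Hk Pk]]|Hn].
  - apply (IH k); auto.
  - exists j; split; auto. intros k Hk Pk; apply Hn; eauto.
Qed.

Lemma Phi_inj p s s' : Phi p s = Phi p s' -> s = s'.
Proof.
  intros H. apply functional_extensionality; intros j0.
  destruct (Bool.bool_dec (s j0) (s' j0)) as [E|E]; auto. exfalso.
  destruct (min_ex (fun j => s j <> s' j) j0 E) as [m [Hm Hlt]].
  assert (Hd : forall d, (d <= m)%nat -> Zw (tgt p s) (m - d) <> Zw (tgt p s') (m - d)).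
  { induction d; intros Hd Heq.
    - rewrite Nat.sub_0_r in Heq.
      set (q := match m with O => p | S k => dec k end).
      assert (F := f_equal (fun f => f (length q)) Heq). cbv beta in F.
      rewrite (Zw_eq _ (tgt_ne p s) m), (Zw_eq _ (tgt_ne p s') m) in F. unfold tgt in F. fold q in F.
      rewrite !wapp_lt in F by (rewrite length_app; simpl; lia).
      rewrite !nth_middle in F. apply Hm; exact F.
    - apply IHd; [lia|].
      replace (m - d)%nat with (S (m - S d)) by lia.
      set (k := (m - S d)%nat) in *.
      assert (Ht : tgt p s k = tgt p s' k).
      { unfold tgt. f_equal. f_equal. destruct (Bool.bool_dec (s k) (s' k)); auto.
        exfalso; apply (Hlt k); [lia|auto]. }
      rewrite (Zw_eq _ (tgt_ne p s) k), (Zw_eq _ (tgt_ne p s') k) in Heq. unfold nn in Heq. rewrite Ht in Heq.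
      apply wapp_inj, Pf_inj in Heq. exact Heq. }
  specialize (Hd m (le_n _)). rewrite Nat.sub_diag in Hd. apply Hd.
  apply val_inj; try apply Zw_inf; try apply tgt_ne. exact H.
Qed.

Theorem proposition6p7 :
  (~ exists f : nat -> R,
        forall x : R, 0 <= x <= 1 -> orbit_dense x -> exists n : nat, f n = x)
  /\
  (forall y : R, 0 <= y <= 1 -> forall eps : R, 0 < eps ->
     exists x : R, 0 <= x <= 1 /\ orbit_dense x /\ Rabs (x - y) < eps).
Proof.
  split.
  - intros [f Hf].
    set (g := fun n => epsilon (inhabits (fun _ : nat => false))
                         (fun s => Phi nil s = f n)).
    set (sd := fun n => negb (g n n)).
    destruct (Phi_good nil sd) as [H1 H2].
    destruct (Hf _ H1 H2) as [n Hn].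
    assert (Hg : Phi nil (g n) = f n).
    { unfold g. apply epsilon_spec. exists sd; auto. }
    rewrite Hn in Hg. apply Phi_inj in Hg.
    assert (E := f_equal (fun s => s n) Hg). unfold sd in E. simpl in E.
    destruct (g n n); discriminate.
  - intros y Hy eps He. destruct (Phi_near y eps Hy He) as [p Hp].
    exists (Phi p (fun _ => false)). destruct (Phi_good p (fun _ => false)). auto.
Qed.
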